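(* The function $\mathrm{gain}$, defined on collections of actively connected subsets of $V$, i.e. $\mathrm{gain}: 2^{\{S\subseteq V:\ S\text{ actively connected}\}}\to\mathbb{R}_{\ge0}$, is submodular.
   Context: Steiner Forest: finite undirected graph $G=(V,E)$, non-negative edge costs $(c_e)_{e\in E}$, set $\mathcal{D}$ of demand pairs $\{a,b\}\subseteq V$ (partners). For $U\subseteq V$, $\delta(U)$ is the set of edges with exactly one endpoint in $U$. The $\varepsilon$-extended moat-growing algorithm (fixed $\varepsilon\ge0$): time $t$ increases continuously from $0$ at unit rate; it maintains tight edges $F$ (initially empty), duals $y_S(t)\ge0$ (initially $0$), and budgets of components (initially $0$). $\mathcal{C}^t$ is the family of vertex sets of connected components of $(V,F)$. A component is demand-active if it contains a vertex not connected in $(V,F)$ to some partner; budget-active if not demand-active but with positive budget; active if either; $\mathcal{A}^t$ is the set of active components. Each $y_S$, $S\in\mathcal{A}^t$, grows at unit rate; budgets of demand-active components grow at rate $\varepsilon$ and of budget-active ones decrease at rate $1$; an edge $e$ with $\sum_{S:e\in\delta(S)}y_S(t)=c_e$ becomes tight and is added to $F$; merging components add budgets. The deactivation time $\tau_v$ of $v$ is the largest $t$ such that for all $s<t$, $v$ lies in a set of $\mathcal{A}^s$. Vertices $u,v$ are actively connected if for some $t$ they lie in a common set of $\mathcal{C}^t$ and $\tau_u,\tau_v\ge t$; this is an equivalence relation and a set is actively connected if contained in one equivalence class. For a collection $\mathcal{S}$ of actively connected sets, $\mathcal{A}^t/\mathcal{S}$ arises from $\mathcal{A}^t$ by merging sets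 of $\mathcal{A}^t$ into a single set whenever they are intersected by the same $S\in\mathcal{S}$ (transitively), and $\mathrm{gain}(\mathcal{S})=2\int_0^\infty(|\mathcal{A}^t|-|\mathcal{A}^t/\mathcal{S}|)\,dt$. *)

(* Defs.v *)
From HB Require Import structures.
From mathcomp Require Import all_boot all_order all_algebra.
From mathcomp Require Import all_classical all_reals all_analysis.
Set Implicit Arguments. Unset Strict Implicit. Unset Printing Implicit Defensive.
Import Order.TTheory GRing.Theory Num.Theory.
Local Open Scope ring_scope.

(* Graph G = (V, E): V a finite type, E a set of 2-element subsets of V.
   Edge costs c : {set V} -> R (only values on E matter).
   Demand pairs D : {set {set V}} (each a 2-element set {a,b}).
   A run of the algorithm is described by the functions of time
   F : R -> {set {set V}} (tight edges F at time t) and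
   A : R -> {set {set V}} (the family A^t of active components). *)

Section MoatGrowing.
Variables (R : realType) (V : finType).

Definition adj (Fs : {set {set V}}) : rel V := fun u v => [set u; v] \in Fs.

Definition comp (Fs : {set {set V}}) (v : V) : {set V} :=
  [set w | connect (adj Fs) v w].

Definition comps (Fs : {set {set V}}) : {set {set V}} :=
  [set comp Fs v | v : V].

Definition delta (E : {set {set V}}) (U : {set V}) : {set {set V}} :=
  [set e in E | #|e :&: U| == 1%N].

Definition partners (D : {set {set V}}) (u v : V) : bool := [set u; v] \in D.

Definition dactive (D : {set {set V}}) (Fs : {set {set V}}) (S : {set V}) : bool :=
  (S \in comps Fs) &&
  [exists v in S, exists w, partners D v w && ~~ connect (adj Fs) v w].

Local Notation mu := (@lebesgue_measure R).

Definition ydual (A : R -> {set {set V}}) (S : {set V}) (t : R) : \bar R :=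
  mu [set s : R | (0 <= s < t) && (S \in A s)]%classic.

Definition load (E : {set {set V}}) (A : R -> {set {set V}}) (e : {set V}) (t : R)
  : \bar R :=
  (\sum_(S : {set V} | e \in delta E S) ydual A S t)%E.

Definition dact_time D (F A : R -> {set {set V}}) (S : {set V}) (t : R) : \bar R :=
  mu [set s : R | [&& 0 <= s < t, S \in A s & dactive D (F s) S]]%classic.
Definition bact_time D (F A : R -> {set {set V}}) (S : {set V}) (t : R) : \bar R :=
  mu [set s : R | [&& 0 <= s < t, S \in A s & ~~ dactive D (F s) S]]%classic.

(* Budget of the component S at time t: budgets of demand-active components
   grow at rate eps, those of budget-active ones decrease at rate 1, and
   merging adds budgets; hence the budget of S is the sum, over all earlier
   components T contained in S, of their net budget growth. *)
Definition budget D eps (F A : R -> {set {set V}}) (S : {set V}) (t : R) : \bar R :=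
  (\sum_(T : {set V} | T \subset S)
      (eps%:E * dact_time D F A T t - bact_time D F A T t))%E.

Definition is_run (E : {set {set V}}) (c : {set V} -> R) (D : {set {set V}})
    (eps : R) (F A : R -> {set {set V}}) : Prop :=
  [/\
      (forall t, 0 <= t -> F t = [set e in E | ((c e)%:E <= load E A e t)%E]),
      (forall t, 0 <= t -> A t = [set S in comps (F t) |
                                  dactive D (F t) S || (0 < budget D eps F A S t)%E]) &
      (* finitely many events: F and A are constant between event times *)
      (exists ts : seq R, forall s t, 0 <= s <= t ->
          (forall r, r \in ts -> ~~ (s < r <= t)) -> F t = F s /\ A t = A s)].

Definition tau (A : R -> {set {set V}}) (v : V) : \bar R :=
  ereal_sup [set t%:E | t in [set t : R | 0 <= t /\
      (forall s, 0 <= s < t -> [exists S in A s, v \in S])]]%classic.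

Definition actively_connected (F A : R -> {set {set V}}) (u v : V) : Prop :=
  exists t : R, [/\ 0 <= t,
     (exists2 S, S \in comps (F t) & (u \in S) && (v \in S)),
     (t%:E <= tau A u)%E & (t%:E <= tau A v)%E].

Definition actively_connected_set (F A : R -> {set {set V}}) (S : {set V}) : Prop :=
  forall u v, u \in S -> v \in S -> actively_connected F A u v.

(* A^t / SS : merge sets of At intersected by a common S in SS, transitively *)
Definition merge_rel (SS At : {set {set V}}) : rel {set V} := fun T1 T2 =>
  [&& T1 \in At, T2 \in At &
      [exists S in SS, (S :&: T1 != finset.set0) && (S :&: T2 != finset.set0)]].

Definition quot (At SS : {set {set V}}) : {set {set V}} :=
  [set \bigcup_(T2 in At | connect (merge_rel SS At) T1 T2) T2 | T1 in At].

Definition gain (A : R -> {set {set V}}) (SS : {set {set V}}) : \bar R :=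
  (2%:E * \int[mu]_(t in [set t : R | (0 <= t)%R]%classic)
            ((#|A t|%:R - #|quot (A t) SS|%:R)%R%:E))%E.

End MoatGrowing.

(* Main.v *)
Require Import Defs.
From HB Require Import structures.
From mathcomp Require Import all_boot all_order all_algebra.
From mathcomp Require Import all_classical all_reals all_analysis.
From mathcomp Require Import measurable_realfun.
From mathcomp Require Import zify lra.
Import Order.TTheory GRing.Theory Num.Theory.
Set Implicit Arguments. Unset Strict Implicit. Unset Printing Implicit Defensive.

Local Open Scope nat_scope.
Section Comb.
Variable X : finType.
Definition gr (G : {set X * X}) : rel X := fun x y => ((x,y) \in G) || ((y,x) \in G).
Lemma gr_sym G : symmetric (gr G).
Proof. by move=> x y; rewrite /gr orbC. Qed.
Lemma gr_csym G : connect_sym (gr G).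
Proof. exact/sym_connect_sym/gr_sym. Qed.
Definition cls G x := [set y | connect (gr G) x y].
Definition kc (At : {set X}) G := #|[set cls G x | x in At]|.

Lemma cls_eq G x y : connect (gr G) x y -> cls G x = cls G y.
Proof. by move=> h; apply/setP=> z; rewrite !inE (same_connect (gr_csym G) h). Qed.

Lemma conn_mon (G G' : {set X * X}) : G \subset G' -> forall x y, connect (gr G) x y -> connect (gr G') x y.
Proof.
move=> sGG'; apply: connect_sub => x y /orP[h|h]; apply: connect1;
  by rewrite /gr (fintype.subsetP sGG' _ h) ?orbT.
Qed.

Lemma kstep (At : {set X}) (G : {set X * X}) (a b : X) : a \in At -> b \in At ->
  kc At (G :|: [set (a, b)]) + ~~ connect (gr G) a b = kc At G.
Proof.
move=> aA bA; set G' := G :|: [set (a, b)].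
have sG : G \subset G' by apply: finset.subsetUl.
have eab : connect (gr G') a b by apply: connect1; rewrite /gr !inE eqxx orbT.
have symG := gr_csym G; have symG' := gr_csym G'.
case: (boolP (connect (gr G) a b)) => cab /=.
  rewrite addn0 /kc; suff h : cls G' =1 cls G by rewrite (eq_imset _ h).
  move=> x; apply/setP => y.
  rewrite !inE; apply/idP/idP; last exact: conn_mon.
  apply: connect_sub => u v /orP[]; rewrite !inE => /orP[h|/eqP[-> ->]] //.
  - by apply: connect1; rewrite /gr h.
  - by apply: connect1; rewrite /gr h orbT.
  - by rewrite symG.
set ca := cls G a; set cb := cls G b.
pose c' x := if x \in ca :|: cb then ca :|: cb else cls G x.
have aca : a \in ca by rewrite inE connect0.
have bcb : b \in cb by rewrite inE connect0.
have aU : a \in ca :|: cb by rewrite inE aca.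
have bU : b \in ca :|: cb by rewrite inE bcb orbT.
have inab u : u \in ca :|: cb -> connect (gr G') a u.
  rewrite !inE => /orP[] h; first exact: conn_mon h.
  by apply: connect_trans eab _; apply: conn_mon h.
have notin x : x \notin ca :|: cb -> forall z, z \in ca :|: cb -> ~~ connect (gr G) x z.
  move=> hx z; rewrite !inE => /orP[] hz; apply/negP => hxz; move: hx;
  rewrite !inE; [rewrite (connect_trans hz) ?orbT // | rewrite (connect_trans hz) ?orbT //];
  by rewrite symG.
have clsE x : cls G' x = c' x.
  rewrite /c'; case: ifP => hx; apply/setP => y; rewrite inE; apply/idP/idP.
  - move=> hxy; have cl : closed_mem (gr G') (mem (ca :|: cb)).
      move=> u v; rewrite /gr !inE => /orP[] /orP[h|/eqP[-> ->]].
      - have huv : connect (gr G) u v by apply: connect1; rewrite /gr h.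
        by rewrite !(same_connect_r symG huv).
      - by rewrite !connect0 !orbT.
      - have huv : connect (gr G) v u by apply: connect1; rewrite /gr h.
        by rewrite !(same_connect_r symG huv).
      - by rewrite !connect0 !orbT.
    by rewrite -(closed_connect cl hxy).
  - move=> hy; apply: connect_trans (inab _ hy); rewrite symG'; exact: inab.
  - move=> hxy; have cl : closed_mem (gr G') (mem (cls G x)).
      have nxa := notin x (negbT hx) a; have nxb := notin x (negbT hx) b.
      move=> u v; rewrite /gr !inE => /orP[] /orP[h|/eqP[-> ->]].
      - have huv : connect (gr G) u v by apply: connect1; rewrite /gr h.
        by rewrite !(same_connect_r symG huv).
      - by rewrite (negbTE (nxa aU)) (negbTE (nxb bU)).
      - have huv : connect (gr G) v u by apply: connect1; rewrite /gr h.
        by rewrite !(same_connect_r symG huv).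
      - by rewrite (negbTE (nxa aU)) (negbTE (nxb bU)).
    by rewrite -(closed_connect cl hxy) inE connect0.
  - by rewrite inE; apply: conn_mon.
have neab : ca != cb.
  apply/negP => /eqP e; move: bcb; rewrite -e inE; exact/negP.
have imE : [set cls G' x | x in At] =
    ([set cls G x | x in At] :\ ca :\ cb) :|: [set ca :|: cb].
  apply/setP => C; rewrite !inE; apply/imsetP/idP.
    case=> x xA ->; rewrite clsE /c'; case: ifP => hx; first by rewrite eqxx orbT.
    have hc z : z \in ca :|: cb -> cls G x != cls G z.
      move=> hz; apply/negP => /eqP e.
      have : z \in cls G x by rewrite e inE connect0.
      by rewrite inE (negbTE (notin x (negbT hx) z hz)).
    by rewrite (hc b bU) (hc a aU) /= imset_f.
  case/orP => [/and3P[hb ha /imsetP[x xA eC]]|/eqP ->]; last by exists a; rewrite // clsE /c' aU.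
  subst C; exists x => //; rewrite clsE /c'; case: ifP => // hx.
  move: hx; rewrite inE => /orP[] h; rewrite inE in h; [move: ha|move: hb]; rewrite /ca /cb (cls_eq h) eqxx; by [].
have nU : ca :|: cb \notin [set cls G x | x in At].
  apply/imsetP => -[x _ e].
  have : a \in cls G x by rewrite -e.
  have : b \in cls G x by rewrite -e.
  rewrite !inE => hb ha; move/negP: cab; apply.
  by apply: connect_trans hb; rewrite symG.
have nU' : ca :|: cb \notin [set cls G x | x in At] :\ ca :\ cb.
  by rewrite !inE (negbTE nU) !andbF.
rewrite /kc imE finset.setUC cardsU1 nU' add1n.
rewrite (cardsD1 ca [set cls G x | x in At]) (cardsD1 cb ([set cls G x | x in At] :\ ca)).
have caK : ca \in [set cls G x | x in At] by apply: imset_f.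
have cbK : cb \in [set cls G x | x in At] :\ ca by rewrite !inE eq_sym neab /cb imset_f.
by rewrite caK cbK addn1.
Qed.
Lemma ksuper (At : {set X}) (G1 B D : {set X * X}) : B \subset G1 ->
  D \subset finset.setX At At ->
  kc At G1 + kc At (B :|: D) <= kc At (G1 :|: D) + kc At B.
Proof.
move=> sB; have [n le] : exists n, #|D| <= n by exists #|D|.
elim: n D le => [|n IH] D le sD.
  by move: le; rewrite leqn0 cards_eq0 => /eqP ->; rewrite !finset.setU0.
case: (finset.set_0Vmem D) => [->|[e eD]]; first by rewrite !finset.setU0.
set D' := D :\ e.
have le' : #|D'| <= n by move: le; rewrite (cardsD1 e D) eD add1n ltnS.
have sD' : D' \subset finset.setX At At by apply: fintype.subset_trans sD; apply: finset.subsetDl.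
have {IH}IH := IH D' le' sD'.
have eD' : D = D' :|: [set e] by rewrite finset.setUC finset.setD1K.
clearbody D'; case: e eD eD' => a b eD eD'.
have /setXP[aA bA] := fintype.subsetP sD _ eD.
rewrite eD' !finset.setUA.
have k1 : kc At (G1 :|: D' :|: [set (a, b)]) + ~~ connect (gr (G1 :|: D')) a b = kc At (G1 :|: D') := kstep _ aA bA.
have k2 : kc At (B :|: D' :|: [set (a, b)]) + ~~ connect (gr (B :|: D')) a b = kc At (B :|: D') := kstep _ aA bA.
have mon : connect (gr (B :|: D')) a b -> connect (gr (G1 :|: D')) a b.
  by apply: conn_mon; apply: finset.setSU.
move: mon k1 k2; case: (connect (gr (B :|: D')) a b); case: (connect (gr (G1 :|: D')) a b) => //= m k1 k2; (try by move: (m isT)); clear m; simpl in k1, k2; move: IH k1 k2; set u1 := kc At (G1 :|: D' :|: [set (a, b)]); set u2 := kc At (B :|: D' :|: [set (a, b)]); set u3 := kc At (G1 :|: D'); set u4 := kc At (B :|: D'); set u5 := kc At G1; set u6 := kc At B; lia.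
Qed.
End Comb.

Section Bridge.
Variable V : finType.

Definition Eset (At SS : {set {set V}}) : {set {set V} * {set V}} :=
  [set p | merge_rel SS At p.1 p.2].

Lemma merge_rel_sym (SS At : {set {set V}}) : symmetric (merge_rel SS At).
Proof.
move=> x y; rewrite /merge_rel; apply/and3P/and3P => -[h1 h2 /existsP[S /andP[hS /andP[a b]]]];
  split => //; apply/existsP; exists S; by rewrite hS a b.
Qed.

Lemma grE (SS At : {set {set V}}) : gr (Eset At SS) =2 merge_rel SS At.
Proof. by move=> x y; rewrite /gr !inE /= (merge_rel_sym _ _ y x) orbb. Qed.

Lemma card_kernel (T T' T'' : finType) (A : {set T}) (f : T -> T') (g : T -> T'') :
  {in A &, forall x y, g x = g y -> f x = f y} -> #|f @: A| <= #|g @: A|.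
Proof.
move=> h; case: (finset.set_0Vmem A) => [->|[x0 x0A]]; first by rewrite !finset.imset0 cards0.
pose F y := odflt (f x0) (omap f [pick x in A | g x == y]).
have FE : {in A, (F \o g) =1 f}.
  move=> x xA; rewrite /F /=; case: pickP => [x' /andP[x'A /eqP e]|/(_ x)].
    by rewrite /= (h _ _ x'A xA e).
  by rewrite xA eqxx.
by rewrite -(eq_in_imset FE) imset_comp leq_imset_card.
Qed.

Lemma quot_card (At SS : {set {set V}}) :
  (forall T, T \in At -> T != finset.set0) ->
  (forall T T' v, T \in At -> T' \in At -> v \in T -> v \in T' -> T = T') ->
  #|quot At SS| = kc At (Eset At SS).
Proof.
move=> ne dis.
have cE : forall x y, connect (gr (Eset At SS)) x y = connect (merge_rel SS At) x y.
  exact: eq_connect (grE SS At).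
have key : {in At &, forall x y,
  (\bigcup_(T2 in At | connect (merge_rel SS At) x T2) T2 =
   \bigcup_(T2 in At | connect (merge_rel SS At) y T2) T2) <->
  cls (Eset At SS) x = cls (Eset At SS) y}.
  move=> x y xA yA; split.
    move=> e; have /set0Pn[v vx] := ne _ xA.
    have : v \in \bigcup_(T2 in At | connect (merge_rel SS At) x T2) T2.
      by apply/bigcupP; exists x; rewrite ?xA ?connect0.
    rewrite e => /bigcupP[T2 /andP[T2A cyT2] vT2].
    rewrite (dis _ _ _ xA T2A vx vT2); symmetry; apply: cls_eq; by rewrite cE.
  move=> e; apply: eq_bigl => z; congr (_ && _).
  by move/setP: e => /(_ z); rewrite !inE !cE.
rewrite /quot /kc; apply/eqP; rewrite eqn_leq; apply/andP; split; apply: card_kernel.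
  by move=> x y xA yA /(key x y xA yA).
by move=> x y xA yA /(key x y xA yA).
Qed.

Lemma pw (At SS1 SS2 : {set {set V}}) :
  (forall T, T \in At -> T != finset.set0) ->
  (forall T T' v, T \in At -> T' \in At -> v \in T -> v \in T' -> T = T') ->
  #|quot At SS1| + #|quot At SS2| <= #|quot At (SS1 :|: SS2)| + #|quot At (SS1 :&: SS2)|.
Proof.
move=> ne dis; rewrite !quot_card //.
have sub1 : Eset At (SS1 :&: SS2) \subset Eset At SS1.
  apply/fintype.subsetP => -[x y]; rewrite !inE /= /merge_rel => /and3P[-> -> /existsP[S /andP[]]].
  by rewrite inE => /andP[hS _] h; apply/existsP; exists S; rewrite hS.
have sub2 : Eset At (SS1 :&: SS2) \subset Eset At SS2.
  apply/fintype.subsetP => -[x y]; rewrite !inE /= /merge_rel => /and3P[-> -> /existsP[S /andP[]]].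
  by rewrite inE => /andP[_ hS] h; apply/existsP; exists S; rewrite hS.
have sD : Eset At SS2 \subset finset.setX At At.
  by apply/fintype.subsetP => -[x y]; rewrite !inE /= /merge_rel => /and3P[-> -> _].
have eU : Eset At (SS1 :|: SS2) = Eset At SS1 :|: Eset At SS2.
  apply/setP => -[x y]; rewrite !inE /= /merge_rel.
  case: (x \in At); case: (y \in At) => //=.
  apply/existsP/orP.
    by case=> S /andP[]; rewrite inE => /orP[] hS h; [left|right]; apply/existsP; exists S; rewrite hS.
  by case=> /existsP[S /andP[hS h]]; exists S; rewrite inE hS ?orbT.
have := ksuper sub1 sD.
by rewrite (finset.setUidPr sub2) eU addnC.
Qed.

End Bridge.

Local Open Scope ring_scope.

Section PF.
Variable R : realType.
Definition pf (l : seq R) (t : R) : R :=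
  \big[Num.max/0]_(r <- l) (if r <= t then Num.max r 0 else 0).

Lemma pf_nd l : {homo pf l : s t / s <= t}.
Proof.
move=> s t st; rewrite /pf; elim: l => [|r l IH]; rewrite ?big_nil ?big_cons //.
have tm : (if r <= s then Num.max r 0 else 0) <= (if r <= t then Num.max r 0 else 0).
  case: ifP => rs; first by rewrite (le_trans rs st).
  by case: ifP => _; rewrite ?le_max ?lexx ?orbT.
by rewrite ge_max !le_max tm IH !orbT.
Qed.

Lemma pf_mem l t : pf l t \in 0 :: l.
Proof.
rewrite /pf; elim: l => [|r l IH]; rewrite ?big_nil ?big_cons ?mem_head //.
rewrite !inE in IH *; rewrite maxEle; case: ifP => _.
  by case/orP: IH => ->; rewrite ?orbT.
by case: ifP => _; rewrite ?eqxx // maxEle; case: ifP => _; rewrite ?eqxx ?orbT.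
Qed.

Lemma pf_ge0 l t : 0 <= pf l t.
Proof.
rewrite /pf; elim: l => [|r l IH]; rewrite ?big_nil ?big_cons ?lexx //.
by rewrite le_max IH orbT.
Qed.

Lemma pf_le l t : 0 <= t -> pf l t <= t.
Proof.
move=> t0; rewrite /pf; elim: l => [|r l IH]; rewrite ?big_nil ?big_cons //.
rewrite ge_max IH andbT; case: ifP => // rt.
by rewrite ge_max rt t0.
Qed.

Lemma pf_ge l t r : r \in l -> r <= t -> r <= pf l t.
Proof.
rewrite /pf; elim: l => [|r' l IH] //; rewrite inE big_cons => /orP[/eqP ->|rl] rt.
  by rewrite rt le_max le_max lexx.
by rewrite le_max IH ?orbT.
Qed.
End PF.

Theorem lemma3p5 (R : realType) (V : finType) (E : {set {set V}})
    (c : {set V} -> R) (D : {set {set V}}) (eps : R)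
    (F A : R -> {set {set V}}) :
  (forall e, e \in E -> #|e| = 2%N) ->
  (forall e, e \in E -> 0 <= c e) ->
  (forall d, d \in D -> #|d| = 2%N) ->
  0 <= eps ->
  is_run E c D eps F A ->
  forall SS1 SS2 : {set {set V}},
    (forall S, S \in SS1 -> actively_connected_set F A S) ->
    (forall S, S \in SS2 -> actively_connected_set F A S) ->
    (gain A (SS1 :|: SS2) + gain A (SS1 :&: SS2) <= gain A SS1 + gain A SS2)%E.
Proof.
move=> _ _ _ _ [_ hA [ts hts]] SS1 SS2 _ _.
have compsP t : 0 <= t -> forall T, T \in A t -> T \in comps (F t).
  by move=> t0 T; rewrite hA // inE => /andP[].
have adjS (Fs : {set {set V}}) : connect_sym (adj Fs).
  by apply: sym_connect_sym => x y; rewrite /adj finset.setUC.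
have ne t : 0 <= t -> forall T, T \in A t -> T != finset.set0.
  move=> t0 T /(compsP t t0) /imsetP[v _ ->]; apply/set0Pn; exists v.
  by rewrite inE connect0.
have dis t : 0 <= t -> forall T T' v, T \in A t -> T' \in A t -> v \in T -> v \in T' -> T = T'.
  move=> t0 T T' v /(compsP t t0) /imsetP[u _ ->] /(compsP t t0) /imsetP[u' _ ->].
  rewrite !inE => hu hu'.
  have ce : forall w, connect (adj (F t)) w v -> Defs.comp (F t) w = Defs.comp (F t) v.
    by move=> w hw; apply/setP => z; rewrite !inE (same_connect (adjS _) hw).
  by rewrite (ce _ hu) (ce _ hu').
have mD0 : measurable [set t : R | (0 <= t)%R]%classic.
  have -> : [set t : R | (0 <= t)%R]%classic = `[(0:R), +oo[%classic.
    by apply/seteqP; split => x /=; rewrite in_itv /= andbT.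
  exact: measurable_itv.
have meas (h : {set {set V}} -> R) :
    measurable_fun [set t : R | (0 <= t)%R]%classic (fun t => (h (A t))%:E).
  apply/measurable_EFinP.
  pose p := pf ts.
  have pnd := pf_nd ts; have pmem := pf_mem ts; have p0 := pf_ge0 ts.
  have ple := pf_le ts; have pge := pf_ge (l:=ts).
  have pA t : 0 <= t -> A t = A (p t).
    move=> t0; have h1 : 0 <= p t <= t by rewrite p0 ple.
    have h2 : forall r, r \in ts -> ~~ (p t < r <= t).
      move=> r rts; apply/negP => /andP[lt le].
      by have := pge t r rts le; rewrite leNgt lt.
    by case: (hts _ _ h1 h2).
  move=> _ Y _.
  have -> : ([set t : R | (0 <= t)%R] `&` (fun t => h (A t)) @^-1` Y =
      [set t : R | (0 <= t)%R] `&` p @^-1` [set q | q \in 0 :: ts /\ Y (h (A q))])%classic.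
    apply/seteqP; split => t /= [t0 hy]; split => //.
      by rewrite -pA.
    by case: hy => _; rewrite -pA.
  apply: (nondecreasing_measurable mD0 pnd) => //.
  apply: countable_measurable; first exact: measurable_set1.
  apply: finite_set_countable; apply: (sub_finite_set _ (finite_seq (0 :: ts))).
  by move=> q [].
pose f (SS : {set {set V}}) t := ((#|A t|%:R - #|quot (A t) SS|%:R : R)%:E).
have f0 SS t : (0 <= f SS t)%E.
  by rewrite lee_fin subr_ge0 ler_nat leq_imset_card.
have mf SS : measurable_fun [set t : R | (0 <= t)%R]%classic (f SS).
  exact: (meas (fun X => #|X|%:R - #|quot X SS|%:R)).
have pwR t : (0 <= t)%R ->
    (f (SS1 :|: SS2) t + f (SS1 :&: SS2) t <= f SS1 t + f SS2 t)%E.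
  move=> t0; rewrite /f -!EFinD lee_fin.
  have := @pw V (A t) SS1 SS2 (ne t t0) (dis t t0); rewrite -(ler_nat R) !natrD => h.
  lra.
have iD SSa SSb :
    (\int[lebesgue_measure]_(t in [set t : R | (0 <= t)%R]%classic) (f SSa t + f SSb t) =
     \int[lebesgue_measure]_(t in [set t : R | (0 <= t)%R]%classic) f SSa t +
     \int[lebesgue_measure]_(t in [set t : R | (0 <= t)%R]%classic) f SSb t)%E.
  exact: (ge0_integralD lebesgue_measure mD0 (fun t _ => f0 SSa t) (mf SSa) (fun t _ => f0 SSb t) (mf SSb)).
have ig SS : (0 <= \int[lebesgue_measure]_(t in [set t : R | (0 <= t)%R]%classic) f SS t)%E.
  by apply: integral_ge0 => t _; exact: f0.
have gE SS : gain A SS = (2%:E * \int[lebesgue_measure]_(t in [set t : R | (0 <= t)%R]%classic) f SS t)%E by [].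
rewrite !gE -ge0_muleDr // -ge0_muleDr // -!iD.
apply: lee_pmul => //.
  by apply: integral_ge0 => t _; rewrite adde_ge0.
apply: ge0_le_integral => //.
all: try by move=> t _; rewrite adde_ge0.
all: by apply: emeasurable_funD; apply: mf.
Qed.
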